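(* Let $g$ be a positive integer and $\Gamma=\langle 2,2g+1\rangle$ (the numerical semigroup generated by $2$ and $2g+1$). For every integer $k\ge0$, \[ \delta^1_\Gamma(2g+2+k)=\delta^2_\Gamma(2g+k). \]
   Context: For a numerical semigroup $\Gamma$: $D_\Gamma(x)=\{s\in\Gamma:x-s\in\Gamma\}$, $\delta^1_\Gamma(m)=\min\{|D_\Gamma(m_1)|: m\le m_1\in\Gamma\}$, and $\delta^2_\Gamma(m)=\min\{|D_\Gamma(m_1)\cup D_\Gamma(m_2)|: m\le m_1<m_2,\ m_1,m_2\in\Gamma\}$. *)

(* Defs.v *)
From mathcomp Require Import all_boot.
From Stdlib Require Import ClassicalEpsilon.
Set Implicit Arguments. Unset Strict Implicit. Unset Printing Implicit Defensive.

(* Membership in the numerical semigroup <2, 2g+1>: x = 2a + (2g+1)b for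
   some a, b in N (the witnesses are necessarily <= x). *)
Definition inGamma (g : nat) : pred nat :=
  fun x => [exists a : 'I_x.+1, exists b : 'I_x.+1, x == 2 * a + (2 * g + 1) * b].

(* D_Gamma(x) = { s in Gamma : x - s in Gamma }, listed without repetition
   (s ranges over 0..x, since x - s must lie in Gamma, a subset of N). *)
Definition Dset (G : pred nat) (x : nat) : seq nat :=
  [seq s <- iota 0 x.+1 | G s && G (x - s)].

Definition asb (P : Prop) : bool :=
  if excluded_middle_informative P then true else false.

(* The minimum of a set of naturals given as a predicate (0 if empty). *)
Definition natmin (P : nat -> Prop) : nat :=
  match excluded_middle_informative (exists n, P n) with
  | left h =>
      @ex_minn (fun n => asb (P n))
        (let: ex_intro n Hn := h in
         ex_intro _ n (match excluded_middle_informative (P n) as b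
                        return (if b then true else false) with
                       | left _ => erefl true
                       | right hn => False_ind _ (hn Hn) end))
  | right _ => 0
  end.

Definition delta1 (G : pred nat) (m : nat) : nat :=
  natmin (fun n => exists m1, m <= m1 /\ G m1 /\ size (Dset G m1) = n).

Definition delta2 (G : pred nat) (m : nat) : nat :=
  natmin (fun n => exists m1 m2, m <= m1 /\ m1 < m2 /\ G m1 /\ G m2 /\
                     size (undup (Dset G m1 ++ Dset G m2)) = n).

(* Main.v *)
From Stdlib Require Import ClassicalEpsilon.
Require Import Defs.
From mathcomp Require Import all_boot.
From mathcomp Require Import zify.

Lemma inGP g x : inGamma g x <-> (x %% 2 = 0 \/ 2 * g + 1 <= x).
Proof.
split.
- case/existsP => a /existsP [b /eqP ->].
  case: (posnP b) => [b0|bpos]; [left; rewrite b0; lia | right; nia].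
- move=> H; apply/existsP.
  case: (boolP (x %% 2 == 0)) => /eqP He.
  + exists (inord (x %/ 2)); apply/existsP; exists (inord 0).
    rewrite !inordK; try lia; apply/eqP; lia.
  + exists (inord ((x - (2 * g + 1)) %/ 2)); apply/existsP; exists (inord 1).
    rewrite !inordK; try lia; apply/eqP; lia.
Qed.

Lemma memD g x s : (s \in Dset (inGamma g) x) =
  [&& s <= x, inGamma g s & inGamma g (x - s)].
Proof. by rewrite mem_filter mem_iota leq0n add0n ltnS /= andbC. Qed.

Lemma uniqD g x : uniq (Dset (inGamma g) x).
Proof. by rewrite filter_uniq // iota_uniq. Qed.

Lemma asbP (P : Prop) : reflect P (asb P).
Proof. by rewrite /asb; case: excluded_middle_informative => h; constructor. Qed.

Lemma natminP (P : nat -> Prop) : (exists n, P n) ->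
  P (natmin P) /\ forall n, P n -> natmin P <= n.
Proof.
move=> h; rewrite /natmin; case: excluded_middle_informative => [h'|//].
case: ex_minnP => n /asbP Hn Hmin; split => // n' Pn'.
by apply: Hmin; apply/asbP.
Qed.

Lemma natmin_eq (P Q : nat -> Prop) :
  (forall n, P n -> exists2 n', Q n' & n' <= n) ->
  (forall n, Q n -> exists2 n', P n' & n' <= n) -> natmin P = natmin Q.
Proof.
move=> hPQ hQP.
case: (excluded_middle_informative (exists n, P n)) => [[n Pn]|nP].
- have [n' Qn' _] := hPQ n Pn.
  have [PP Pm] := @natminP P (ex_intro _ n Pn).
  have [QQ Qm] := @natminP Q (ex_intro _ n' Qn').
  apply/eqP; rewrite eqn_leq; apply/andP; split.
  + have [a Pa ha] := hQP _ QQ; exact: leq_trans (Pm _ Pa) ha.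
  + have [a Qa ha] := hPQ _ PP; exact: leq_trans (Qm _ Qa) ha.
- have nQ : ~ exists n, Q n.
    by move=> [n /hQP [n' ? _]]; apply: nP; exists n'.
  rewrite /natmin.
  case: excluded_middle_informative => [h|_]; first by exfalso; apply: nP.
  case: excluded_middle_informative => [h|_]; first by exfalso; apply: nQ.
  by [].
Qed.

Theorem lemma5p1 (g : nat) (hg : 0 < g) (k : nat) :
  delta1 (inGamma g) (2 * g + 2 + k) = delta2 (inGamma g) (2 * g + k).
Proof.
rewrite /delta1 /delta2; apply: natmin_eq.
- move=> n [m1 [hm [Gm <-]]].
  exists (size (undup (Dset (inGamma g) (m1 - 2) ++ Dset (inGamma g) m1))).
    exists (m1 - 2), m1; split; first lia; split; first lia.
    split; last by split.
    apply/inGP; move/inGP: Gm; lia.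
  apply: uniq_leq_size; first exact: undup_uniq.
  move=> s; rewrite mem_undup mem_cat => /orP [|//].
  rewrite !memD => /and3P [h1 h2 h3]; apply/and3P; split => //; first lia.
  apply/inGP; move/inGP: h3; lia.
- move=> n [m1 [m2 [h1 [h2 [G1 [G2 <-]]]]]].
  case: (leqP (2 * g + 2 + k) m2) => hM.
  + exists (size (Dset (inGamma g) m2)); first by exists m2.
    apply: uniq_leq_size; first exact: uniqD.
    by move=> s hs; rewrite mem_undup mem_cat hs orbT.
  + have e2 : m2 = 2 * g + k + 1 by lia.
    have e1 : m1 = 2 * g + k by lia.
    subst m1 m2.
    exists (size (Dset (inGamma g) (2 * g + 2 + k))).
      exists (2 * g + 2 + k); split => //; split => //; apply/inGP; lia.
    have mU : 2 * g + k + 1 \in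
        undup (Dset (inGamma g) (2 * g + k) ++ Dset (inGamma g) (2 * g + k + 1)).
      rewrite mem_undup mem_cat (memD _ (2 * g + k + 1)) leqnn G2 /=.
      apply/orP; right; apply/inGP; lia.
    have sz : 0 < size (undup (Dset (inGamma g) (2 * g + k) ++
                                Dset (inGamma g) (2 * g + k + 1))).
      rewrite lt0n size_eq0; apply/eqP => e; by rewrite e in mU.
    have := @uniq_leq_size _ (Dset (inGamma g) (2 * g + 2 + k))
       ((2 * g + 2 + k) :: rem (2 * g + k + 1)
          (undup (Dset (inGamma g) (2 * g + k) ++ Dset (inGamma g) (2 * g + k + 1))))
       (uniqD _ _).
    rewrite /= size_rem // prednK //; apply.
    move=> s hs; rewrite inE.
    case: (eqVneq s (2 * g + 2 + k)) => [->//|ne] /=.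
    rewrite mem_rem_uniq ?undup_uniq // inE.
    move: hs; rewrite memD => /and3P [hs Gs GM].
    move/inGP: GM => GM.
    apply/andP; split.
      apply/eqP => e; subst s; lia.
    rewrite mem_undup mem_cat !memD Gs /=.
    have [h|h] : ((2 * g + k - s) %% 2 = 0 /\ s <= 2 * g + k) \/
                 ((2 * g + k + 1 - s) %% 2 = 0 /\ s <= 2 * g + k + 1) by lia.
    * apply/orP; left; rewrite h.2 /=; apply/inGP; lia.
    * apply/orP; right; rewrite h.2 /=; apply/inGP; lia.
Qed.
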